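(* Let $k$ be an algebraically closed field, let $\lambda=(\lambda_1\ge\lambda_2\ge\dots)$ be a partition of $n$ (with $\lambda_j=0$ for $j$ beyond its length), and let $X\in\mathfrak{gl}_n(k)$ be a nilpotent matrix whose Jordan block sizes are given by $\lambda$. Let $1\le i\le n-1$. (i) Every $i$-dimensional subspace $W$ of $V=k^n$ contains an $X$-invariant subspace $U$ with $\dim U\ge\sum_{j>n-i}\lambda_j$. (ii) The upper-left $i\times i$ submatrix $X_{\le i,\le i}$ of $X$ has stable rank at most $d_{\lambda,i}:=i-\sum_{j>n-i}\lambda_j$. *)

(* Defs.v *)
From HB Require Import structures.
From mathcomp Require Import all_boot all_order all_algebra.
Set Implicit Arguments. Unset Strict Implicit. Unset Printing Implicit Defensive.
Import Order.TTheory GRing.Theory Num.Theory.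
Local Open Scope ring_scope.

(* [la] is a partition of [n]: a weakly decreasing list of positive parts
   summing to [n].  Parts beyond the length are 0 (nth 0 la j). *)
Definition is_partition (n : nat) (la : seq nat) : bool :=
  [&& sorted geq la, all (fun x => 0 < x)%N la & sumn la == n].

(* Nilpotent Jordan normal form with blocks of sizes la (in this order),
   each block an upper Jordan block (1's on the superdiagonal). *)
Definition nil_jordan (R : pzRingType) (n : nat) (la : seq nat) : 'M[R]_n :=
  \matrix_(r < n, c < n)
    (((c == r.+1 :> nat) && ((c : nat) \notin scanl addn 0%N la))%:R : R).

Definition has_jordan_type (R : fieldType) (n : nat) (X : 'M[R]_n)
  (la : seq nat) : Prop :=
  exists P : 'M[R]_n, P \in unitmx /\ X = P *m nil_jordan R n la *m invmx P.

(* Stable rank of a square matrix: the eventual (constant) value of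
   rank (A^m) for large m; for an m x m matrix it is attained at exponent m. *)
Definition stable_rank (R : fieldType) (m : nat) (A : 'M[R]_m) : nat :=
  \rank (A ^+ m).

Definition ul_sub (R : Type) (n i : nat) (h : (i <= n)%N) (X : 'M[R]_n) : 'M[R]_i :=
  \matrix_(r < i, c < i) X (widen_ord h r) (widen_ord h c).

(* sum_{j > n - i} lambda_j  (1-indexed), i.e. the sum of the parts of index
   (0-based) >= n - i. *)
Definition tail_sum (la : seq nat) (n i : nat) : nat := sumn (drop (n - i) la).

(* Main.v *)
Require Import Defs.
From HB Require Import structures.
From mathcomp Require Import all_boot all_order all_algebra.
From mathcomp Require Import zify.
Set Implicit Arguments. Unset Strict Implicit. Unset Printing Implicit Defensive.
Import Order.TTheory GRing.Theory Num.Theory.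
Local Open Scope ring_scope.

Definition lm (F : fieldType) n (M : 'M[F]_n) : 'End('cV[F]_n) := linfun (mulmx M).
Lemma lmE (F : fieldType) n (M : 'M[F]_n) v : lm M v = M *m v. Proof. by rewrite lfunE. Qed.

Section Core.
Variables (F : fieldType) (n : nat) (X : 'M[F]_n) (W : {vspace 'cV[F]_n}).
Hypothesis Xn : X ^+ n = 0.
Hypothesis n_gt0 : (0 < n)%N.

Definition pre (m : nat) := (lm (X ^+ m) @^-1: W)%VS.
Definition Umax := (\bigcap_(m < n) pre m)%VS.

Lemma memU u : (u \in Umax) = [forall m : 'I_n, X ^+ m *m u \in W].
Proof.
rewrite memvE; apply/subv_bigcapP/forallP => H m.
  by have := H m isT; rewrite -memvE -memv_preim lmE.
by move=> _; rewrite -memvE -memv_preim lmE.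
Qed.

Lemma UsubW : (Umax <= W)%VS.
Proof.
apply/subvP => u; rewrite memU => /forallP /(_ (Ordinal n_gt0)).
by rewrite expr0 mul1mx.
Qed.

Lemma Uinv u : u \in Umax -> X *m u \in Umax.
Proof.
rewrite !memU => /forallP H; apply/forallP => m.
rewrite mulmxA mulmxE -exprSr.
have [lt|ge] := ltnP m.+1 n; first exact: (H (Ordinal lt)).
have -> : m.+1 = n by apply/eqP; rewrite eqn_leq ge ltn_ord.
by rewrite Xn mul0mx mem0v.
Qed.

Lemma Ukey x : x \in W -> X *m x \in Umax -> x \in Umax.
Proof.
move=> xW; rewrite !memU => /forallP H; apply/forallP => -[[|m] lt].
  by rewrite expr0 mul1mx.
have lt' : (m < n)%N by apply: ltnW.
by have := H (Ordinal lt'); rewrite /= mulmxA mulmxE -exprSr.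
Qed.

Definition Aim m := limg (lm (X ^+ m)).

Lemma A_succ m : Aim m.+1 = (lm X @: Aim m)%VS.
Proof.
have E : lm (X ^+ m.+1) = (lm X \o lm (X ^+ m))%VF.
  by apply/lfunP => v; rewrite comp_lfunE !lmE exprS -mulmxE mulmxA.
by rewrite /Aim E limg_comp.
Qed.

Lemma A_sub m : (Aim m.+1 <= Aim m)%VS.
Proof.
have -> : Aim m.+1 = (lm (X ^+ m) @: (lm X @: fullv))%VS.
  have E : lm (X ^+ m.+1) = (lm (X ^+ m) \o lm X)%VF.
    by apply/lfunP => v; rewrite comp_lfunE !lmE exprSr -mulmxE mulmxA.
  by rewrite /Aim E limg_comp.
exact/limgS/subvf.
Qed.

Lemma step m :
  (\dim (Aim m + Umax) <= \dim (Aim m.+1 + Umax) +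
     minn (n - \dim W) (\dim (Aim m) - \dim (Aim m.+1)))%N.
Proof.
set A := Aim m; set B := Aim m.+1; set U := Umax.
have BA : (B <= A)%VS by apply: A_sub.
have hb : (\dim (A + U) <= \dim (B + U) + (\dim A - \dim B))%N.
  have h1 := dimv_sum_cap A U; have h2 := dimv_sum_cap B U.
  have h3 : (\dim (B :&: U) <= \dim (A :&: U))%N by apply/dimvS/capvS.
  have h4 : (\dim B <= \dim A)%N by apply/dimvS.
  lia.
suff ha : (\dim (A + U) <= \dim (B + U) + (n - \dim W))%N.
  rewrite /minn; case: ifP => _; lia.
set g := lm X.
set K := ((A + U) :&: (g @^-1: U))%VS.
have e1 := limg_ker_dim g (A + U).
have e2 := limg_ker_dim g K.
have e3 : (\dim ((A + U) :&: lker g) <= \dim (K :&: lker g))%N.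
  apply/dimvS/subvP => x /memv_capP [xAU xk]; apply/memv_capP; split => //.
  apply/memv_capP; split => //; rewrite -memv_preim.
  by move: xk; rewrite memv_ker => /eqP ->; rewrite mem0v.
have e4 : (\dim ((g @: (A + U)) :&: U) <= \dim (g @: K))%N.
  apply/dimvS/subvP => y /memv_capP [/memv_imgP [x xAU ->] gxU].
  by apply: memv_img; apply/memv_capP; split => //; rewrite -memv_preim.
have e5 : (g @: (A + U) <= B + U)%VS.
  rewrite limgD /B A_succ -/g; apply: addvS => //.
  apply/subvP => y /memv_imgP [x xU ->]; rewrite /g lmE; exact: Uinv.
have e6 := dimv_sum_cap (g @: (A + U)) U.
have e7 : (\dim (g @: (A + U) + U) <= \dim (B + U))%N.
  by apply/dimvS; rewrite subv_add e5 addvSr.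
have e8 := dimv_sum_cap K W.
have e9 : (\dim (K :&: W) <= \dim U)%N.
  apply/dimvS/subvP => x /memv_capP [/memv_capP [_ xpre] xW].
  by apply: Ukey => //; rewrite -lmE memv_preim.
have e10 : (\dim (K + W) <= n)%N.
  by have := dimvS (subvf (K + W)); rewrite dimvf /dim /= muln1.
have e11 : (\dim W <= n)%N.
  by have := dimvS (subvf W); rewrite dimvf /dim /= muln1.
move: e1 e2 e3 e4 e6 e7 e8 e9 e10 e11. set t1 := \dim (g @: (A + U) :&: U). set t2 := \dim (g @: (A + U) + U). set t3 := \dim (K :&: W). set t4 := \dim (K + W). set t5 := \dim (g @: (A + U)). set t6 := \dim (g @: K). set t7 := \dim ((A + U) :&: lker g). set t8 := \dim (K :&: lker g). set t9 := \dim K. set t10 := \dim U. set t11 := \dim W. set t12 := \dim (A + U). set t13 := \dim (B + U). clearbody t1 t2 t3 t4 t5 t6 t7 t8 t9 t10 t11 t12 t13. lia.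
Qed.

Lemma telescope N :
  (\dim (Aim 0 + Umax) <= \dim (Aim N + Umax) +
     \sum_(m < N) minn (n - \dim W) (\dim (Aim m) - \dim (Aim m.+1)))%N.
Proof.
elim: N => [|N IH]; first by rewrite big_ord0 addn0.
rewrite big_ord_recr /=; apply: (leq_trans IH).
by rewrite [X in (_ <= _ + X)%N]addnC addnA leq_add2r step.
Qed.

Lemma core :
  (n <= \dim Umax +
     \sum_(m < n) minn (n - \dim W) (\dim (Aim m) - \dim (Aim m.+1)))%N.
Proof.
have h0 : \dim (Aim 0 + Umax) = n.
  apply/eqP; rewrite eqn_leq; apply/andP; split.
    by have := dimvS (subvf (Aim 0 + Umax)); rewrite dimvf /dim /= muln1.
  have hf : \dim (fullv : {vspace 'cV[F]_n}) = n by rewrite dimvf /dim /= muln1.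
  apply: (@leq_trans (\dim (fullv : {vspace 'cV[F]_n}))); first by rewrite hf.
  apply/dimvS/subvP => v _; apply: (subvP (addvSl _ _)).
  by apply/memv_imgP; exists v; rewrite ?memvf // lmE expr0 mul1mx.
have hn : \dim (Aim n + Umax) = \dim Umax.
  congr (dimv _); apply/eqP; rewrite eqEsubv addvSr andbT subv_add subvv andbT.
  by apply/subvP => y /memv_imgP [x _ ->]; rewrite lmE Xn mul0mx mem0v.
by have := telescope n; rewrite h0 hn.
Qed.

End Core.

Definition Zcut (S : seq nat) (m r : nat) : bool :=
  ((r == 0%N) || (r \in S)) && ~~ has (fun t => (r < t <= r + m)%N) S.

Lemma scanl_shift a l : scanl addn a l = map (addn a) (scanl addn 0%N l).
Proof.
elim: l a => [|x l IH] a //=.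
rewrite IH [scanl addn x l]IH -map_comp add0n; congr (_ :: _).
by apply: eq_map => y /=; rewrite addnA.
Qed.

Lemma count_Zp la m : all (fun x => 0 < x)%N la ->
  (count (Zcut (scanl addn 0%N la) m) (iota 0 (sumn la)) <= count (fun x => m < x)%N la)%N.
Proof.
elim: la => [|a l IH] //= /andP [a0 pl].
rewrite iotaD count_cat add0n.
have Se : scanl addn 0%N (a :: l) = a :: map (addn a) (scanl addn 0%N l).
  by rewrite /= add0n scanl_shift.
rewrite (scanl_shift a l); apply: leq_add.
  have H : forall r, r \in iota 0 a -> Zcut (a :: map (addn a) (scanl addn 0%N l)) m r ->
      (r == 0%N) && (m < a)%N.
    move=> r; rewrite mem_iota add0n => /andP [_ ra] /andP [].
    rewrite in_cons; case/orP => [r0 hasn|/orP [/eqP ra'|/mapP [s _ rs]]].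
    - rewrite r0 /=; rewrite ltnNge; apply/negP => am; move: hasn.
      by rewrite /= (eqP r0) a0 /= add0n am.
    - by move: ra; rewrite ra' ltnn.
    - by move: ra; rewrite rs ltnNge leq_addr.
  set Z := Zcut _ m.
  rewrite (@eq_in_count _ _ (fun r => Z r && ((r == 0%N) && (m < a)%N))); last first.
    by move=> r rin /=; case Zr: (Z r) => //; rewrite (H r rin Zr).
  apply: (leq_trans (sub_count (a2 := fun r => (r == 0%N) && (m < a)%N) _ _)).
    by move=> r /andP [].
  case: (ltnP m a) => _; last by rewrite (eq_count (a2 := pred0)) ?count_pred0 // => r; rewrite andbF.
  rewrite (eq_count (a2 := pred1 0%N)); last by move=> r; rewrite andbT.
  by rewrite count_uniq_mem ?iota_uniq // leq_b1.
rewrite -[a]addn0 iotaDl count_map addn0.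
apply: leq_trans (IH pl); rewrite leq_eqVlt; apply/orP; left; apply/eqP.
apply: eq_count => r /=; rewrite /Zcut.
have a0' : (a + r == 0%N) = false by apply/negbTE; rewrite addn_eq0 negb_and -lt0n a0.
rewrite a0' /= in_cons -{2}[a]addn0 eqn_add2l (mem_map (@addnI a)) has_map /=.
rewrite ltnNge leq_addr /=; congr (_ && ~~ _); apply: eq_has => t /=.
by rewrite ltn_add2l -addnA leq_add2l.
Qed.

Lemma mem_sumn_scanl x l : l != [::] -> (x + sumn l)%N \in scanl addn x l.
Proof.
elim: l x => [|a l IH] x //= _; rewrite in_cons.
case: l IH => [|b l] IH; first by rewrite addn0 eqxx.
by rewrite addnA IH ?orbT.
Qed.

Lemma take_count la q m : sorted geq la ->
  count (fun x => m < x)%N (take q la) = minn q (count (fun x => m < x)%N la).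
Proof.
elim: la q => [|x l IH] q /=; first by rewrite minn0.
move=> sl.
have tr : transitive geq by move=> a b c h1 h2; exact: leq_trans h2 h1.
have al := order_path_min tr sl.
have sl' := path_sorted sl.
case: q => [|q] /=; first by rewrite min0n.
rewrite IH //.
case: (ltnP m x) => mx /=; first by rewrite !add1n minnSS.
have c0 : count (fun x => m < x)%N l = 0%N.
  apply/eqP; rewrite eqn0Ngt -has_count; apply/hasPn => y yl.
  by rewrite -leqNgt; apply: leq_trans mx; exact: (allP al y yl).
by rewrite c0 minn0.
Qed.

Lemma sum_lt N x : (\sum_(m < N) (m < x)%N)%N = minn x N.
Proof.
elim: N => [|N IH]; first by rewrite big_ord0 minn0.
rewrite big_ord_recr /= IH; case: (ltnP N x) => h /=; lia.
Qed.

Lemma sum_count_le N s : (\sum_(m < N) count (fun x => m < x)%N s <= sumn s)%N.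
Proof.
elim: s => [|x l IH] /=; first by rewrite big1.
rewrite big_split /= sum_lt; apply: leq_add => //; exact: geq_minl.
Qed.



Section Jor.
Variables (F : fieldType) (n : nat) (la : seq nat).
Local Notation S := (scanl addn 0%N la).
Local Notation J := (nil_jordan F n la).

Lemma Jmul p (w : 'M[F]_(n, p)) r j :
  (J *m w) r j = \sum_(c < n) (((c == r.+1 :> nat) && ((c : nat) \notin S))%:R * w c j).
Proof. by rewrite mxE; apply: eq_bigr => c _; rewrite mxE. Qed.

Lemma Jpow_zero p m (w : 'M[F]_(n, p)) (r : 'I_n) j :
  has (fun t => (r < t <= r + m)%N) S -> (J ^+ m *m w) r j = 0.
Proof.
elim: m r => [|m IH] r.
  by case/hasP => t _ /andP [a b]; lia.
move=> H; rewrite exprS -mulmxE -mulmxA Jmul; apply: big1 => c _.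
case: eqP => [ce|_]; last by rewrite /= mul0r.
case cS: ((c : nat) \in S); first by rewrite /= mul0r.
rewrite /= IH ?mulr0 //.
case/hasP: H => t tS /andP [rt tr]; apply/hasP; exists t => //.
have tc : t != c by apply/eqP => tce; move: cS; rewrite -tce tS.
rewrite ce; apply/andP; split; last by lia.
by rewrite ltn_neqAle -ce eq_sym tc /= ce.
Qed.

Hypothesis la0 : la != [::].
Hypothesis sumla : sumn la = n.
Hypothesis pos : all (fun x => 0 < x)%N la.

Lemma Jn : J ^+ n = 0.
Proof.
apply/matrixP => r c; rewrite -(mulmx1 (J ^+ n)) Jpow_zero ?mxE //.
apply/hasP; exists n; last by rewrite ltn_ord leq_addl.
by have := mem_sumn_scanl 0 la0; rewrite add0n sumla.
Qed.

Lemma ker_coord (v : 'cV[F]_n) (c : 'I_n) :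
  J *m v = 0 -> (0 < c)%N -> (c : nat) \notin S -> v c 0 = 0.
Proof.
move=> Jv c0 cS.
have lt : (c.-1 < n)%N by apply: leq_ltn_trans (leq_pred c) (ltn_ord c).
have : (J *m v) (Ordinal lt) 0 = 0 by rewrite Jv mxE.
rewrite Jmul (bigD1 c) //= prednK // eqxx cS /= mul1r big1 ?addr0 // => c' nc.
have -> : (c' == c :> nat) = false by apply/negbTE.
by rewrite /= mul0r.
Qed.

Lemma col_decomp (v : 'cV[F]_n) : v = \sum_(r < n) v r 0 *: delta_mx r 0.
Proof.
rewrite {1}(matrix_sum_delta v); apply: eq_bigr => r _.
by rewrite big_ord1.
Qed.

Lemma dim_cap_ker m :
  (\dim (Aim J m :&: lker (lm J)) <= count (fun x => m < x)%N la)%N.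
Proof.
set L := map (fun r : 'I_n => delta_mx r 0 : 'cV[F]_n) (filter (fun r : 'I_n => Zcut S m r) (enum 'I_n)).
have sub : (Aim J m :&: lker (lm J) <= <<L>>)%VS.
  apply/subvP => v /memv_capP [vA vK].
  move: vK; rewrite memv_ker lmE => /eqP Jv.
  case/memv_imgP: vA => w _; rewrite lmE => vw.
  rewrite (col_decomp v) (bigID (fun r : 'I_n => Zcut S m r)) /=.
  rewrite [X in _ + X]big1 ?addr0; last first.
    move=> r; rewrite /Zcut negb_and negb_or negbK; case/orP => [/andP [r0 rS]|hs].
      by rewrite (ker_coord Jv) ?scale0r // lt0n.
    by rewrite vw Jpow_zero ?scale0r.
  apply: memv_suml => r Zr; apply: memvZ; apply: memv_span.
  by apply/mapP; exists r => //; rewrite mem_filter Zr mem_enum.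
apply: leq_trans (dimvS sub) _; apply: leq_trans (dim_span _) _.
rewrite size_map size_filter.
have -> : count (fun r : 'I_n => Zcut S m r) (enum 'I_n) = count (Zcut S m) (iota 0 n).
  by rewrite -val_enum_ord count_map.
rewrite -sumla; exact: count_Zp.
Qed.
End Jor.


Lemma partJ (F : fieldType) n la (W : {vspace 'cV[F]_n}) :
  is_partition n la -> (0 < n)%N ->
  exists U : {vspace 'cV[F]_n},
    (U <= W)%VS /\ {in U, forall u, nil_jordan F n la *m u \in U} /\
    (sumn (drop (n - \dim W) la) <= \dim U)%N.
Proof.
case/and3P => srt pos /eqP sumla n0.
have la0 : la != [::] by apply/eqP => la0; move: n0; rewrite -sumla la0.
set J := nil_jordan F n la.
have JN : J ^+ n = 0 by apply: Jn.
exists (Umax J W); split; first exact: UsubW.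
split; first by move=> u; apply: Uinv.
have hc := core W JN n0.
set q := (n - \dim W)%N.
have hd : forall m, (\dim (Aim J m) - \dim (Aim J m.+1) <= count (fun x => m < x)%N la)%N.
  move=> m; have := limg_ker_dim (lm J) (Aim J m); rewrite -A_succ => e.
  by rewrite -e addnK; apply: dim_cap_ker.
have hs : (\sum_(m < n) minn q (\dim (Aim J m) - \dim (Aim J m.+1)) <= sumn (take q la))%N.
  apply: leq_trans (sum_count_le n (take q la)).
  apply: leq_sum => m _; rewrite take_count //.
  by rewrite leq_min geq_minl /=; apply: leq_trans (geq_minr _ _) (hd m).
have : sumn la = (sumn (take q la) + sumn (drop q la))%N by rewrite -sumn_cat cat_take_drop.
rewrite sumla => eq.
have h1 := leq_trans hc (leq_add (leqnn _) hs).
by rewrite -(leq_add2l (sumn (take q la))) -eq addnC.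
Qed.

Lemma inj_dim (F : fieldType) n (P : 'M[F]_n) (U : {vspace 'cV[F]_n}) :
  P \in unitmx -> \dim (lm P @: U) = \dim U.
Proof.
move=> Pu; apply: limg_dim_eq; apply/eqP; rewrite -subv0; apply/subvP => v.
case/memv_capP => _; rewrite memv_ker lmE memv0 => /eqP h.
by rewrite -(mulKmx Pu v) h mulmx0.
Qed.

Lemma part_i (F : fieldType) n la (X : 'M[F]_n) (W : {vspace 'cV[F]_n}) :
  is_partition n la -> has_jordan_type X la -> (0 < n)%N ->
  exists U : {vspace 'cV[F]_n},
    (U <= W)%VS /\ {in U, forall u, X *m u \in U} /\
    (sumn (drop (n - \dim W) la) <= \dim U)%N.
Proof.
move=> pl [P [Pu ->]] n0.
have Pu' : invmx P \in unitmx by rewrite unitmx_inv.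
have [U' [sU [iU dU]]] := partJ (lm (invmx P) @: W)%VS pl n0.
exists (lm P @: U')%VS; split; last split.
- apply/subvP => u /memv_imgP [u' u'U ->].
  have /memv_imgP [w wW ->] := subvP sU _ u'U.
  by rewrite !lmE mulKVmx.
- move=> u /memv_imgP [u' u'U ->]; rewrite lmE.
  rewrite -!mulmxA mulKmx // -lmE; apply: memv_img.
  exact: iU.
- by rewrite inj_dim // -(inj_dim W Pu').
Qed.


Lemma rank_le_limg (F : fieldType) m (M : 'M[F]_m) :
  (\rank M <= \dim (limg (lm M)))%N.
Proof.
set L := limg (lm M); set b := vbasis L.
pose B : 'M[F]_(m, \dim L) := \matrix_(a, k) (b`_k) a 0.
pose C : 'M[F]_(\dim L, m) := \matrix_(k, j) coord b k (col j M).
have -> : M = B *m C.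
  apply/matrixP => a j; rewrite !mxE.
  have cin : col j M \in L by rewrite colE -lmE; apply: memv_img; exact: memvf.
  have := coord_vbasis cin; move/(congr1 (fun v : 'cV[F]_m => v a 0)).
  rewrite mxE summxE => ->; apply: eq_bigr => k _.
  by rewrite !mxE mulrC.
apply: leq_trans (mxrankM_maxl _ _) _; exact: rank_leq_col.
Qed.

Lemma conj_pow (F : fieldType) n (P J : 'M[F]_n) m : P \in unitmx ->
  (P *m J *m invmx P) ^+ m = P *m J ^+ m *m invmx P.
Proof.
move=> Pu; elim: m => [|m IH]; first by rewrite !expr0 mulmx1 mulmxV.
rewrite exprS IH exprS -!mulmxE !mulmxA mulmxKV //.
Qed.

Section Chain.
Variables (F : fieldType) (n : nat) (X : 'M[F]_n) (U : {vspace 'cV[F]_n}).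
Hypothesis Xn : X ^+ n = 0.
Hypothesis inv : {in U, forall u, X *m u \in U}.

Let V m := (lm (X ^+ m) @: U)%VS.

Lemma V_succ m : V m.+1 = (lm X @: V m)%VS.
Proof.
have E : lm (X ^+ m.+1) = (lm X \o lm (X ^+ m))%VF.
  by apply/lfunP => v; rewrite comp_lfunE !lmE exprS -mulmxE mulmxA.
by rewrite /V E limg_comp.
Qed.

Lemma V_sub m : (V m.+1 <= V m)%VS.
Proof.
have E : lm (X ^+ m.+1) = (lm (X ^+ m) \o lm X)%VF.
  by apply/lfunP => v; rewrite comp_lfunE !lmE exprSr -mulmxE mulmxA.
rewrite /V E limg_comp; apply: limgS; apply/subvP => y /memv_imgP [x xU ->].
by rewrite lmE; apply: inv.
Qed.

Lemma V_const m j : V m.+1 = V m -> V (m + j) = V m.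
Proof.
move=> e; elim: j => [|j IH]; first by rewrite addn0.
by rewrite addnS V_succ IH -V_succ.
Qed.

Lemma V_big m : V (m + n) = 0%VS.
Proof.
apply/eqP; rewrite -subv0; apply/subvP => y /memv_imgP [x _ ->].
by rewrite lmE exprD Xn mulr0 mul0mx memv0.
Qed.

Lemma V_dim m : V m = 0%VS \/ (\dim (V m) + m <= \dim U)%N.
Proof.
elim: m => [|m IH].
  right; rewrite addn0 /V.
  have -> : lm (X ^+ 0) = \1%VF by apply/lfunP => v; rewrite lmE lfunE expr0 mul1mx.
  by rewrite lim1g.
case: IH => [V0|IH].
  by left; apply/eqP; rewrite -subv0 -V0; apply: V_sub.
have [le eqd] := dimv_leqif_eq (V_sub m).
case: (eqVneq (V m.+1) (V m)) => [e|ne].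
  by left; rewrite e; rewrite -(V_const n e) V_big.
right; have lt : (\dim (V m.+1) < \dim (V m))%N.
  by rewrite ltn_neqAle le andbT eqd.
lia.
Qed.

Lemma chain u : u \in U -> X ^+ (\dim U) *m u = 0.
Proof.
move=> uU.
have h : V (\dim U) = 0%VS.
  case: (V_dim (\dim U)) => // h; apply/eqP; rewrite -dimv_eq0; lia.
have : lm (X ^+ \dim U) u \in V (\dim U) by apply: memv_img.
by rewrite h memv0 lmE => /eqP.
Qed.

End Chain.


Section Trunc.
Variables (F : fieldType) (n i : nat) (h : (i <= n)%N).
Definition Em : 'M[F]_(n, i) := \matrix_(r, c) ((r == c :> nat)%:R).
Definition Tm : 'M[F]_(i, n) := \matrix_(r, c) ((r == c :> nat)%:R).

Lemma TmE p (Y : 'M[F]_(n, p)) r b : (Tm *m Y) r b = Y (widen_ord h r) b.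
Proof.
rewrite mxE (bigD1 (widen_ord h r)) //= mxE eqxx mul1r big1 ?addr0 // => a ne.
rewrite mxE; have -> : (r == a :> nat) = false.
  by apply/negbTE; apply: contra ne => /eqP e; apply/eqP/val_inj; rewrite /= e.
by rewrite mul0r.
Qed.

Lemma EmE p (Y : 'M[F]_(p, n)) a c : (Y *m Em) a c = Y a (widen_ord h c).
Proof.
rewrite mxE (bigD1 (widen_ord h c)) //= mxE eqxx mulr1 big1 ?addr0 // => b ne.
rewrite mxE; have -> : (b == c :> nat) = false.
  by apply/negbTE; apply: contra ne => /eqP e; apply/eqP/val_inj; rewrite /= e.
by rewrite mulr0.
Qed.

Lemma TE : Tm *m Em = 1%:M.
Proof. by apply/matrixP => r c; rewrite TmE !mxE. Qed.

Lemma ulE (X : 'M[F]_n) : ul_sub h X = Tm *m X *m Em.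
Proof. by apply/matrixP => r c; rewrite mxE EmE TmE. Qed.
End Trunc.

Unset Implicit Arguments.

Theorem lemma2p1 (k : closedFieldType) (n : nat) (la : seq nat)
  (X : 'M[k]_n) (i : nat) (hi : (i < n)%N) :
  is_partition n la ->
  has_jordan_type X la ->
  (1 <= i)%N ->
  (forall W : {vspace 'cV[k]_n}, \dim W = i ->
     exists U : {vspace 'cV[k]_n},
       (U <= W)%VS /\ {in U, forall u, X *m u \in U} /\
       (tail_sum la n i <= \dim U)%N) /\
  (stable_rank (ul_sub (ltnW hi) X) <= i - tail_sum la n i)%N.
Proof.
move=> pl jt i1.
have n0 : (0 < n)%N by apply: leq_ltn_trans hi.
have partI : forall W : {vspace 'cV[k]_n}, \dim W = i ->
     exists U : {vspace 'cV[k]_n},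
       (U <= W)%VS /\ {in U, forall u, X *m u \in U} /\
       (tail_sum la n i <= \dim U)%N.
  by move=> W dW; rewrite /tail_sum -dW; apply: part_i.
split => //.
set h := ltnW hi.
set E := @Em k n i; set T := @Tm k n i.
have TEe : T *m E = 1%:M by apply: TE.
pose em : 'Hom('cV[k]_i, 'cV[k]_n) := linfun (mulmx E).
pose tm : 'Hom('cV[k]_n, 'cV[k]_i) := linfun (mulmx T).
set W0 := limg em.
have dfi : \dim (fullv : {vspace 'cV[k]_i}) = i by rewrite dimvf /dim /= muln1.
have dW0 : \dim W0 = i.
  rewrite limg_dim_eq // ; apply/eqP; rewrite -subv0; apply/subvP => v.
  case/memv_capP => _; rewrite memv_ker lfunE memv0 /= => /eqP ev.
  by rewrite -(mul1mx v) -TEe -mulmxA ev mulmx0.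
have W0E : forall u, u \in W0 -> E *m (T *m u) = u.
  by move=> u /memv_imgP [v _ ->]; rewrite lfunE /= (mulmxA T) TEe mul1mx.
have [U [sU [iU dU]]] := partI W0 dW0.
have Xn : X ^+ n = 0.
  case: jt => P [Pu ->]; rewrite conj_pow // Jn ?mulmx0 ?mul0mx //.
    case/and3P: pl => _ _ /eqP sl; apply/eqP => la0; move: n0; by rewrite -sl la0.
  by case/and3P: pl => _ _ /eqP.
set A := ul_sub h X.
have AT : forall m u, u \in U -> A ^+ m *m (T *m u) = T *m (X ^+ m *m u).
  elim => [|m IH] u uU; first by rewrite !expr0 !mul1mx.
  rewrite exprSr -mulmxE -mulmxA.
  have -> : A *m (T *m u) = T *m (X *m u).
    by rewrite /A ulE -/E -/T -!mulmxA W0E //; exact: (subvP sU).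
  by rewrite IH ?iU // mulmxA mulmxE -exprSr.
have dUi : (\dim U <= i)%N by rewrite -dW0; apply: dimvS.
have Xi : forall u, u \in U -> X ^+ i *m u = 0.
  move=> u uU; rewrite -(subnK dUi) exprD -mulmxE -mulmxA chain ?mulmx0 //.
have dU'' : \dim (tm @: U) = \dim U.
  apply: limg_dim_eq; apply/eqP; rewrite -subv0; apply/subvP => u.
  case/memv_capP => uU; rewrite memv_ker lfunE memv0 /= => /eqP tu.
  by rewrite -(W0E u (subvP sU u uU)) tu mulmx0.
have sK : (tm @: U <= lker (lm (A ^+ i)))%VS.
  apply/subvP => y /memv_imgP [u uU ->]; rewrite memv_ker lmE lfunE /= AT //.
  by rewrite Xi // mulmx0.
have e := limg_ker_dim (lm (A ^+ i)) fullv.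
rewrite capfv dfi in e.
have r := rank_le_limg (A ^+ i).
have d1 := dimvS sK.
rewrite /stable_rank -/A; rewrite /tail_sum in dU.
rewrite /tail_sum; move: e r d1 dU; rewrite dU''.
set a := \dim (lker _); set b := \dim (limg _); set c := \dim U; set d := \rank _.
set t := sumn _; clearbody a b c d t; lia.
Qed.
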